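(* Let $X$ be a non-empty compact ultrametric space with a finite similarity structure $\mathrm{Sim}_X$ such that there are only finitely many $\mathrm{Sim}_X$-equivalence classes of balls. Then for every $n\in\mathbb N$ the sub-level complex $K_{\le n}$ is locally finite.
   Context: A *ball* in $X$ is a closed metric ball of positive radius. A *finite similarity structure* $\mathrm{Sim}_X$ assigns to each ordered pair of balls $B_1,B_2$ a finite (possibly empty) set $\mathrm{Sim}_X(B_1,B_2)$ of surjective similarities $B_1\to B_2$, closed under identities, inverses, compositions, and restrictions to sub-balls. Balls $A,B$ are *$\mathrm{Sim}_X$-equivalent* if $\mathrm{Sim}_X(A,B)\neq\emptyset$. An embedding $h:B\to X$ ($B$ a ball) is *locally determined by* $\mathrm{Sim}_X$ if every $x\in B$ lies in a ball $B'\subseteq B$ with $h(B')$ a ball and $h|_{B'}\in\mathrm{Sim}_X(B',h(B'))$. Let $\mathcal S$ be the set of pairs $(f,B)$ with $B$ a ball and $f:B\to X$ an embedding locally determined by $\mathrm{Sim}_X$; $(f_1,B_1)\sim(f_2,B_2)$ iff $f_2h=f_1$ for some $h\in\mathrm{Sim}_X(B_1,B_2)$; $[f,B]$ is the class. A *vertex of height $k$* is a set $v=\{[f_1,B_1],\dots,[f_k,B_k]\}$ of $k$ classes with $f_1(B_1),\dots,f_k(B_k)$ pairwise disjoint and with union $X$. If $[f,B]\in v$ and $B$ has more than one point, the *simple expansion of $v$ at $[f,B]$* replaces $[f,B]$ by the classes $[f|_A,A]$, $A$ ranging over the maximal proper sub-balls of $B$; write $u\nearrow v$ if $v$ is a simple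 expansion of $u$. $v\le w$ means there is a chain $v=v_1\nearrow\cdots\nearrow v_n=w$ ($n\ge1$). The *similarity complex* $K$ has these vertices and $n$-simplices the chains $v_0<\dots<v_n$. $K_{\le n}$ is the full subcomplex of $K$ spanned by vertices of height $\le n$. *)

(* Defs.v *)
From Stdlib Require Import Reals List Relations.
Import ListNotations.
Open Scope R_scope.

Section SimilarityComplex.

Context {X : Type} (d : X -> X -> R).

Definition ultrametric : Prop :=
  (forall x y, 0 <= d x y) /\
  (forall x y, d x y = 0 <-> x = y) /\
  (forall x y, d x y = d y x) /\
  (forall x y z, d x z <= Rmax (d x y) (d y z)).

(** Compactness (sequential compactness; equivalent for metric spaces). *)
Definition seq_compact : Prop :=
  forall u : nat -> X, exists (phi : nat -> nat) (l : X),
    (forall i j, (i < j)%nat -> (phi i < phi j)%nat) /\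
    (forall eps, eps > 0 -> exists N, forall k, (N <= k)%nat -> d (u (phi k)) l < eps).

Definition subset (A B : X -> Prop) : Prop := forall x, A x -> B x.
Definition image (f : X -> X) (A : X -> Prop) : X -> Prop :=
  fun y => exists x, A x /\ f x = y.
Definition agree (B : X -> Prop) (f g : X -> X) : Prop := forall x, B x -> f x = g x.

Definition is_ball (B : X -> Prop) : Prop :=
  exists x r, r > 0 /\ forall y, B y <-> d x y <= r.

Definition surj_similarity (B1 B2 : X -> Prop) (f : X -> X) : Prop :=
  (forall x, B1 x -> B2 (f x)) /\
  (forall y, B2 y -> exists x, B1 x /\ f x = y) /\
  (exists lam, lam > 0 /\ forall x y, B1 x -> B1 y -> d (f x) (f y) = lam * d x y).

Variable Sim : (X -> Prop) -> (X -> Prop) -> (X -> X) -> Prop.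

(** Finite similarity structure.  [Sim B1 B2 f] means that the map
    [x |-> f x] on [B1] belongs to Sim_X(B1,B2); maps are identified
    when they agree on [B1]. *)
Definition finite_similarity_structure : Prop :=
  (forall B1 B2 f, Sim B1 B2 f -> is_ball B1 /\ is_ball B2 /\ surj_similarity B1 B2 f) /\
  (forall B1 B2 f g, Sim B1 B2 f -> agree B1 f g -> Sim B1 B2 g) /\
  (forall B1 B2, exists L : list (X -> X),
      forall f, Sim B1 B2 f -> exists g, In g L /\ agree B1 f g) /\
  (forall B, is_ball B -> Sim B B (fun x => x)) /\
  (forall B1 B2 f, Sim B1 B2 f -> exists g, Sim B2 B1 g /\
      (forall x, B1 x -> g (f x) = x) /\ (forall y, B2 y -> f (g y) = y)) /\
  (forall B1 B2 B3 f g, Sim B1 B2 f -> Sim B2 B3 g -> Sim B1 B3 (fun x => g (f x))) /\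
  (forall B1 B2 f B', Sim B1 B2 f -> is_ball B' -> subset B' B1 ->
      Sim B' (image f B') f).

Definition sim_equivalent (A B : X -> Prop) : Prop := exists f, Sim A B f.

Definition finitely_many_ball_classes : Prop :=
  exists Bs : list (X -> Prop), forall B, is_ball B ->
    exists B0, In B0 Bs /\ sim_equivalent B B0.

Definition embedding (B : X -> Prop) (f : X -> X) : Prop :=
  (forall x y, B x -> B y -> f x = f y -> x = y) /\
  (forall x, B x -> forall eps, eps > 0 -> exists del, del > 0 /\
      forall y, B y -> d x y < del -> d (f x) (f y) < eps) /\
  (forall x, B x -> forall eps, eps > 0 -> exists del, del > 0 /\
      forall y, B y -> d (f x) (f y) < del -> d x y < eps).

Definition locally_determined (B : X -> Prop) (h : X -> X) : Prop :=
  forall x, B x -> exists B', is_ball B' /\ subset B' B /\ B' x /\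
     is_ball (image h B') /\ Sim B' (image h B') h.

Definition Pair : Type := ((X -> X) * (X -> Prop))%type.

Definition inS (p : Pair) : Prop :=
  is_ball (snd p) /\ embedding (snd p) (fst p) /\ locally_determined (snd p) (fst p).

Definition pair_equiv (p q : Pair) : Prop :=
  exists h, Sim (snd p) (snd q) h /\ forall x, snd p x -> fst q (h x) = fst p x.

Definition Cls : Type := Pair -> Prop.

Definition cls (p : Pair) : Cls := fun q => inS q /\ pair_equiv q p.

Definition Vtx : Type := Cls -> Prop.

Definition pair0 : Pair := (fun x => x, fun _ => False).

Definition vertex_height (v : Vtx) (k : nat) : Prop :=
  exists ps : list Pair,
    length ps = k /\
    (forall p, In p ps -> inS p) /\
    (forall c, v c <-> exists p, In p ps /\ c = cls p) /\
    (forall i j, (i < k)%nat -> (j < k)%nat -> i <> j -> forall y,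
        ~ (image (fst (nth i ps pair0)) (snd (nth i ps pair0)) y /\
           image (fst (nth j ps pair0)) (snd (nth j ps pair0)) y)) /\
    (forall y, exists p, In p ps /\ image (fst p) (snd p) y).

Definition is_vertex (v : Vtx) : Prop := exists k, vertex_height v k.

Definition max_proper_subball (B A : X -> Prop) : Prop :=
  is_ball A /\ subset A B /\ ~ subset B A /\
  forall A', is_ball A' -> subset A A' -> subset A' B -> ~ subset B A' -> subset A' A.

Definition simple_expansion (u v : Vtx) : Prop :=
  is_vertex u /\ is_vertex v /\
  exists (f : X -> X) (B : X -> Prop),
    u (cls (f, B)) /\
    (exists x y, B x /\ B y /\ x <> y) /\
    forall c, v c <-> ((u c /\ c <> cls (f, B)) \/
                       exists A, max_proper_subball B A /\ c = cls (f, A)).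

Definition vle (v w : Vtx) : Prop := clos_refl_trans_1n Vtx simple_expansion v w.
Definition vlt (v w : Vtx) : Prop := vle v w /\ v <> w.

Fixpoint strict_chain (s : list Vtx) : Prop :=
  match s with
  | [] => True
  | v :: s' => match s' with
               | [] => True
               | w :: _ => vlt v w /\ strict_chain s'
               end
  end.

Definition simplex_K_le (n : nat) (s : list Vtx) : Prop :=
  s <> [] /\
  (forall v, In v s -> exists k, vertex_height v k /\ (k <= n)%nat) /\
  strict_chain s.

Definition K_le_locally_finite (n : nat) : Prop :=
  forall v, (exists k, vertex_height v k /\ (k <= n)%nat) ->
    exists LL : list (list Vtx),
      forall s, simplex_K_le n s -> In v s -> In s LL.

End SimilarityComplex.

(* Main.v *)
Require Import Defs.
From Stdlib Require Import Reals List Relations Lra Lia Classical ClassicalEpsilon FunctionalExtensionality PropExtensionality.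
Import ListNotations.
Open Scope R_scope.

Fixpoint iter_pts {X : Type} (next : list X -> X) (k : nat) : list X :=
  match k with O => [] | S k => next (iter_pts next k) :: iter_pts next k end.

Lemma iter_pts_in {X : Type} (next : list X -> X) i k :
  (i < k)%nat -> In (next (iter_pts next i)) (iter_pts next k).
Proof.
  induction k; intros H; [lia|]. simpl.
  destruct (Nat.eq_dec i k) as [->|Hne]; [now left|]. right; apply IHk; lia.
Qed.

Lemma list_max (l : list R) (P : R -> Prop) :
  (exists t, In t l /\ P t) -> exists m, In m l /\ P m /\ forall t, In t l -> P t -> t <= m.
Proof.
  induction l as [|a l IH]; intros [t [Ht Pt]]; [destruct Ht|].
  destruct (classic (exists t, In t l /\ P t)) as [Hex|Hno].
  - destruct (IH Hex) as [m [Hm [Pm Hmax]]].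
    destruct (classic (P a /\ m < a)) as [[Pa Hlt]|Hn].
    + exists a; split; [now left|split; auto]. intros t' [Hq|Ht'] Pt'; [subst; lra|].
      specialize (Hmax t' Ht' Pt'); lra.
    + exists m; split; [now right|split; auto]. intros t' [Hq|Ht'] Pt'; auto.
      subst. destruct (Rle_or_lt t' m); auto. exfalso; apply Hn; split; auto.
  - destruct Ht as [Hq|Ht]; [|exfalso; apply Hno; eauto]. subst t.
    exists a; split; [now left|split; auto]. intros t' [Hq|Ht'] Pt'; [subst; lra|].
    exfalso; apply Hno; eauto.
Qed.

Definition bs {X : Type} (d : X -> X -> R) (x : X) (r : R) : X -> Prop := fun y => d x y <= r.

Lemma pred_ext {X : Type} (A B : X -> Prop) : (forall x, A x <-> B x) -> A = B.
Proof. intros H; apply functional_extensionality; intros x; apply propositional_extensionality; auto. Qed.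

Section Geo.
Context {X : Type} (d : X -> X -> R).
Hypothesis UM : ultrametric d.
Hypothesis SC : seq_compact d.

Lemma d_nn x y : 0 <= d x y. Proof. apply UM. Qed.
Lemma d_0 x : d x x = 0. Proof. apply UM; auto. Qed.
Lemma d_eq x y : d x y = 0 -> x = y. Proof. apply UM. Qed.
Lemma d_sym x y : d x y = d y x. Proof. apply UM. Qed.
Lemma d_ult x y z : d x z <= Rmax (d x y) (d y z). Proof. apply UM. Qed.
Lemma ult_le x y z r : d x y <= r -> d y z <= r -> d x z <= r.
Proof. intros; eapply Rle_trans; [apply (d_ult x y z)|]; apply Rmax_lub; auto. Qed.
Lemma ult_lt x y z r : d x y < r -> d y z < r -> d x z < r.
Proof. intros; eapply Rle_lt_trans; [apply (d_ult x y z)|]; apply Rmax_lub_lt; auto. Qed.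
Lemma ult_eq x y z : d x y < d x z -> d y z = d x z.
Proof.
  intros H. pose proof (d_ult y x z) as H1. pose proof (d_ult x y z) as H2.
  rewrite (d_sym y x) in H1. unfold Rmax in *.
  destruct (Rle_dec (d x y) (d x z)); [|lra].
  destruct (Rle_dec (d x y) (d y z)); lra.
Qed.

Lemma TB eps : eps > 0 -> exists N : list X, forall x, exists n, In n N /\ d x n < eps.
Proof.
  intros Heps. apply NNPP; intros H.
  assert (Hn : forall N : list X, {x : X | forall n, In n N -> eps <= d x n}).
  { intros N. apply constructive_indefinite_description.
    apply not_all_not_ex; intros Hall. apply H. exists N. intros x.
    apply NNPP; intros Hx. apply (Hall x). intros n Hin.
    destruct (Rle_or_lt eps (d x n)); auto. exfalso; apply Hx; eauto. }
  set (next := fun N => proj1_sig (Hn N)).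
  set (u := fun k => next (iter_pts next k)).
  destruct (SC u) as [phi [l [Hphi Hcv]]].
  destruct (Hcv (eps/2)) as [N HN]; [lra|].
  assert (Hab := Hphi N (S N) (Nat.lt_succ_diag_r N)).
  assert (Hin := iter_pts_in next _ _ Hab).
  pose proof (proj2_sig (Hn (iter_pts next (phi (S N)))) _ Hin) as Hge.
  fold (next (iter_pts next (phi (S N)))) in Hge.
  assert (H1 := HN (S N) (Nat.le_succ_diag_r N)).
  assert (H2 := HN N (Nat.le_refl N)).
  unfold u in H1, H2.
  assert (d (next (iter_pts next (phi (S N)))) (next (iter_pts next (phi N))) < eps).
  { apply ult_lt with l; [lra|]. rewrite d_sym; lra. }
  lra.
Qed.

Definition Dset (B : X -> Prop) (t : R) := exists a b, B a /\ B b /\ d a b = t.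

Lemma fin_dist (B : X -> Prop) eps : eps > 0 -> exists Dl : list R,
  forall a b, B a -> B b -> eps <= d a b -> In (d a b) Dl.
Proof.
  intros He. destruct (TB eps He) as [N HN].
  exists (flat_map (fun n => map (d n) N) N).
  intros a b Ha Hb Hab.
  destruct (HN a) as [na [Hna Hda]]. destruct (HN b) as [nb [Hnb Hdb]].
  apply in_flat_map; exists na; split; auto. apply in_map_iff; exists nb; split; auto.
  assert (E1 : d na b = d a b) by (apply ult_eq; lra).
  assert (E2 : d nb na = d b na).
  { apply ult_eq. rewrite (d_sym b na), E1. lra. }
  rewrite (d_sym na nb), E2, (d_sym b na), E1; auto.
Qed.

Lemma dist_max (B : X -> Prop) (Q : R -> Prop) t0 : t0 > 0 -> Dset B t0 -> Q t0 ->
  exists m, Dset B m /\ Q m /\ t0 <= m /\ forall t, Dset B t -> Q t -> t0 <= t -> t <= m.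
Proof.
  intros Ht0 HD HQ. destruct (fin_dist B t0 Ht0) as [Dl HDl].
  destruct (list_max Dl (fun t => Dset B t /\ Q t /\ t0 <= t)) as [m [Hm [[Dm [Qm Lm]] Hmax]]].
  - exists t0. destruct HD as [a [b [Ha [Hb E]]]]. split; [rewrite <- E; apply HDl; auto; lra|].
    split; [exists a, b; auto|split; auto; lra].
  - exists m; repeat split; auto. intros t Dt Qt Lt. apply Hmax; auto.
    destruct Dt as [a [b [Ha [Hb E]]]]; rewrite <- E; apply HDl; auto; lra.
Qed.

Lemma geom (B : X -> Prop) : is_ball d B -> (exists x y, B x /\ B y /\ x <> y) ->
  exists del (N : list X), del > 0 /\
  (forall A, max_proper_subball d B A -> exists n, In n N /\ A = bs d n del) /\
  (forall x, B x -> max_proper_subball d B (bs d x del)) /\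
  (exists x z, B x /\ B z /\ forall y, ~ (bs d x del y /\ bs d z del y)).
Proof.
  intros [c [R0 [HR HB]]] [x0 [y0 [Hx0 [Hy0 Hne]]]].
  set (t0 := d x0 y0).
  assert (Ht0 : t0 > 0).
  { unfold t0. destruct (d_nn x0 y0) as [H|H]; [lra|]. exfalso; apply Hne, d_eq; auto. }
  assert (Dt0 : Dset B t0) by (exists x0, y0; auto).
  destruct (dist_max B (fun _ => True) t0 Ht0 Dt0 I) as [M [DM [_ [LM HM]]]].
  assert (HMall : forall a b, B a -> B b -> d a b <= M).
  { intros a b Ha Hb. destruct (Rle_or_lt t0 (d a b)).
    - apply HM; auto. exists a, b; auto.
    - lra. }
  assert (HMR : M <= R0).
  { destruct DM as [a [b [Ha [Hb E]]]]. rewrite <- E. apply ult_le with c.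
    - rewrite d_sym; apply HB; auto.
    - apply HB; auto. }
  assert (Hdel : exists del, 0 < del < M /\ forall a b, B a -> B b -> del < d a b -> M <= d a b).
  { destruct (classic (exists t, Dset B t /\ 0 < t < M)) as [[t1 [Dt1 Ht1]]|Hno].
    - destruct (dist_max B (fun t => t < M) t1 (proj1 Ht1) Dt1 (proj2 Ht1)) as [m [Dm [Qm [Lm Hm]]]].
      exists m; split; [lra|]. intros a b Ha Hb Hlt.
      destruct (Rle_or_lt M (d a b)) as [?|Hl]; auto. exfalso.
      assert (d a b <= m); [apply Hm; auto; [exists a, b; auto|lra]|lra].
    - exists (M/2); split; [lra|]. intros a b Ha Hb Hlt.
      destruct (Rle_or_lt M (d a b)) as [?|Hl]; auto. exfalso; apply Hno.
      exists (d a b); split; [exists a, b; auto|lra]. }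
  destruct Hdel as [del [[Hd0 HdM] Hdel]].
  assert (Far : forall x, B x -> exists z, B z /\ M <= d x z).
  { intros x Hx. destruct DM as [a [b [Ha [Hb E]]]].
    pose proof (d_ult a x b) as H. rewrite E in H. unfold Rmax in H.
    destruct (Rle_dec (d a x) (d x b)); [exists b; split; auto|exists a; split; auto; rewrite d_sym; lra]. }
  assert (Big : forall A, is_ball d A -> forall x y, A x -> A y -> B x -> B y -> M <= d x y ->
     forall z, B z -> A z).
  { intros A [c' [r' [Hr' HA]]] x y Ax Ay Bx By Hxy z Bz. apply HA.
    apply HA in Ax. apply HA in Ay. apply ult_le with x; auto.
    apply Rle_trans with M; [apply HMall; auto|].
    apply Rle_trans with (d x y); auto. apply ult_le with c'; auto. rewrite d_sym; auto. }
  assert (Sub : forall x, B x -> subset (bs d x del) B).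
  { intros x Hx y Hy. apply HB. apply HB in Hx. apply ult_le with x; auto.
    unfold bs in Hy; lra. }
  assert (Bl : forall x, is_ball d (bs d x del)).
  { intros x. exists x, del; split; [lra|]. intros; unfold bs; tauto. }
  assert (Ctr : forall x, bs d x del x).
  { intros x; unfold bs; rewrite d_0; lra. }
  assert (Maxb : forall x, B x -> max_proper_subball d B (bs d x del)).
  { intros x Hx. split; [apply Bl|]. split; [apply Sub; auto|]. split.
    - intros Hs. destruct (Far x Hx) as [z [Hz Hxz]]. specialize (Hs z Hz). unfold bs in Hs; lra.
    - intros A' HA' Hsub1 Hsub2 Hnot y Hy. unfold bs.
      destruct (Rle_or_lt (d x y) del) as [?|Hlt]; auto. exfalso. apply Hnot.
      intros z Hz. apply (Big A' HA' x y); auto. }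
  destruct (TB del Hd0) as [N HN].
  exists del, N. split; auto. split; [|split; auto].
  - intros A [HA [HAB [HnA Hmax]]].
    destruct HA as [c1 [r1 [Hr1 HA1]]].
    assert (Ac1 : A c1) by (apply HA1; rewrite d_0; lra).
    assert (Sub1 : subset A (bs d c1 del)).
    { intros y Hy. unfold bs. destruct (Rle_or_lt (d c1 y) del) as [?|Hlt]; auto.
      exfalso; apply HnA. intros z Hz. apply (Big A (ex_intro _ c1 (ex_intro _ r1 (conj Hr1 HA1))) c1 y); auto.
      }
    assert (Sub2 : subset (bs d c1 del) A).
    { pose proof (Maxb c1 (HAB c1 Ac1)) as [_ [_ [Hn _]]].
      apply Hmax; [apply Bl|exact Sub1|apply Sub; auto|exact Hn]. }
    destruct (HN c1) as [n [Hn Hdn]]. exists n; split; auto.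
    apply pred_ext; intros y; split; intros Hy.
    + apply Sub1 in Hy. unfold bs in *. apply ult_le with c1; [rewrite d_sym|]; lra.
    + apply Sub2. unfold bs in *. apply ult_le with n; lra.
  - destruct (Far x0 Hx0) as [z [Hz Hxz]]. exists x0, z. split; auto. split; auto.
    intros y [H1 H2]. unfold bs in *. assert (d x0 z <= del); [|lra].
    apply ult_le with y; auto. rewrite d_sym; auto.
Qed.

Lemma maxsub_list (B : X -> Prop) : is_ball d B ->
  exists LA, forall A, max_proper_subball d B A -> In A LA.
Proof.
  intros HB. destruct (classic (exists x y, B x /\ B y /\ x <> y)) as [H2|H1].
  - destruct (geom B HB H2) as [del [N [_ [Ha _]]]].
    exists (map (fun n => bs d n del) N). intros A HA. destruct (Ha A HA) as [n [Hn ->]].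
    apply in_map_iff; exists n; auto.
  - exists []. intros A [[c [r [Hr HA]]] [HAB [HnA _]]]. exfalso.
    apply HnA. intros y Hy. assert (Ac : A c) by (apply HA; rewrite d_0; lra).
    destruct (classic (y = c)) as [->|Hne]; auto. exfalso; apply H1. exists y, c; auto.
Qed.

Lemma maxsub_cover (B : X -> Prop) : is_ball d B -> (exists x y, B x /\ B y /\ x <> y) ->
  exists LA, (forall A, In A LA -> max_proper_subball d B A) /\
     forall x, B x -> exists A, In A LA /\ A x.
Proof.
  intros HB H2. destruct (geom B HB H2) as [del [N [Hd [Ha [Hb _]]]]].
  exists (filter (fun A => if excluded_middle_informative (max_proper_subball d B A) then true else false)
            (map (fun n => bs d n del) N)).
  split.
  - intros A HA. apply filter_In in HA. destruct HA as [_ H].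
    destruct (excluded_middle_informative _); auto; discriminate.
  - intros x Hx. pose proof (Hb x Hx) as Hm. destruct (Ha _ Hm) as [n [Hn E]].
    exists (bs d x del). split; [|unfold bs; rewrite d_0; lra].
    apply filter_In; split.
    + rewrite E; apply in_map_iff; exists n; auto.
    + destruct (excluded_middle_informative _); auto.
Qed.

End Geo.

Definition cdec {X : Type} : forall x y : @Cls X, {x = y} + {x <> y} :=
  fun x y => excluded_middle_informative (x = y).

Lemma NoDup_remove_gen {T : Type} (dec : forall x y : T, {x = y} + {x <> y}) (l : list T) x :
  NoDup l -> NoDup (remove dec x l).
Proof.
  induction l as [|a l IH]; intros H; simpl; [constructor|].
  inversion H; subst. destruct (dec x a); auto. constructor; auto.
  intros Hin. apply in_remove in Hin. tauto.
Qed.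

Lemma lists_bounded {T : Type} (F : list T) k : exists LL, forall s, (length s <= k)%nat -> incl s F -> In s LL.
Proof.
  induction k as [|k [LL IH]].
  - exists [[]]. intros [|a s] Hl _; [now left|simpl in Hl; lia].
  - exists ([] :: flat_map (fun a => map (cons a) LL) F).
    intros [|a s] Hl Hi; [now left|]. right. apply in_flat_map. exists a. split; [apply Hi; now left|].
    apply in_map. apply IH; [simpl in Hl; lia|]. intros y Hy; apply Hi; now right.
Qed.

Lemma allND {T : Type} (F : list T) : exists LL, forall s, NoDup s -> incl s F -> In s LL.
Proof.
  destruct (lists_bounded F (length F)) as [LL H]. exists LL. intros s Hn Hi.
  apply H; auto. apply NoDup_incl_length; auto.
Qed.


Section Cl.
Context {X : Type} (d : X -> X -> R) (Sim : (X -> Prop) -> (X -> Prop) -> (X -> X) -> Prop).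
Hypothesis UM : ultrametric d.
Hypothesis SC : seq_compact d.
Hypothesis FS : finite_similarity_structure d Sim.

Lemma FS1 B1 B2 f : Sim B1 B2 f -> is_ball d B1 /\ is_ball d B2 /\ surj_similarity d B1 B2 f.
Proof. apply FS. Qed.
Lemma FS3 B1 B2 : exists L : list (X -> X), forall f, Sim B1 B2 f -> exists g, In g L /\ agree B1 f g.
Proof. apply FS. Qed.
Lemma FS4 B : is_ball d B -> Sim B B (fun x => x).
Proof. apply FS. Qed.
Lemma FS5 B1 B2 f : Sim B1 B2 f -> exists g, Sim B2 B1 g /\
      (forall x, B1 x -> g (f x) = x) /\ (forall y, B2 y -> f (g y) = y).
Proof. apply FS. Qed.
Lemma FS6 B1 B2 B3 f g : Sim B1 B2 f -> Sim B2 B3 g -> Sim B1 B3 (fun x => g (f x)).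
Proof. apply FS. Qed.
Lemma FS7 B1 B2 f B' : Sim B1 B2 f -> is_ball d B' -> subset B' B1 -> Sim B' (image f B') f.
Proof. apply FS. Qed.

Lemma sim_maps B1 B2 f x : Sim B1 B2 f -> B1 x -> B2 (f x).
Proof. intros H Hx. apply (FS1 _ _ _ H); auto. Qed.
Lemma sim_surj B1 B2 f y : Sim B1 B2 f -> B2 y -> exists x, B1 x /\ f x = y.
Proof. intros H Hy. apply (FS1 _ _ _ H); auto. Qed.
Lemma sim_inj B1 B2 f x y : Sim B1 B2 f -> B1 x -> B1 y -> f x = f y -> x = y.
Proof.
  intros H Hx Hy E. destruct (FS1 _ _ _ H) as [_ [_ [_ [_ [lam [Hl Hd]]]]]].
  specialize (Hd x y Hx Hy). rewrite E, d_0 in Hd by auto.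
  apply (d_eq d UM). assert (lam * d x y = 0) by lra.
  destruct (Rmult_integral _ _ H0); lra.
Qed.

Lemma ball_ne B : is_ball d B -> exists x, B x.
Proof. intros [c [r [Hr H]]]. exists c. apply H. rewrite (d_0 d UM). lra. Qed.

Definition img (p : Pair) : X -> Prop := image (fst p) (snd p).

Lemma cls_refl p : inS d Sim p -> cls d Sim p p.
Proof.
  intros Hp. split; auto. exists (fun x => x). split; auto.
  apply FS4. apply Hp.
Qed.

Lemma pe_img q p : pair_equiv Sim q p -> forall y, img q y <-> img p y.
Proof.
  intros [h [Hh E]] y. unfold img, image; split.
  - intros [x [Hx <-]]. exists (h x). split; [eapply sim_maps; eauto|]. apply E; auto.
  - intros [x [Hx <-]]. destruct (sim_surj _ _ _ x Hh Hx) as [x' [Hx' <-]].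
    exists x'; split; auto. rewrite E; auto.
Qed.

Lemma cls_eq_img p q : inS d Sim q -> cls d Sim p = cls d Sim q -> forall y, img q y <-> img p y.
Proof.
  intros Hq E. assert (H : cls d Sim p q) by (rewrite E; apply cls_refl; auto).
  apply pe_img, H.
Qed.

Lemma inS_img_ne p : inS d Sim p -> exists y, img p y.
Proof.
  intros Hp. destruct (ball_ne _ (proj1 Hp)) as [x Hx]. exists (fst p x). exists x; auto.
Qed.

Lemma transport B1 B2 h f1 f2 A : Sim B1 B2 h -> (forall x, B1 x -> f2 (h x) = f1 x) ->
  is_ball d A -> subset A B1 -> cls d Sim (f1, A) = cls d Sim (f2, image h A).
Proof.
  intros Hh E HA Hsub. pose proof (FS7 _ _ _ _ Hh HA Hsub) as HhA.
  apply pred_ext; intros q. unfold cls, pair_equiv; simpl. split; intros [Hq [k [Hk Ek]]]; split; auto.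
  - exists (fun x => h (k x)). split; [eapply FS6; eauto|].
    intros x Hx. rewrite E; [apply Ek; auto|]. apply Hsub. eapply sim_maps; eauto.
  - destruct (FS5 _ _ _ HhA) as [g [Hg [Eg1 Eg2]]].
    exists (fun x => g (k x)). split; [eapply FS6; eauto|].
    intros x Hx. assert (Hkx : image h A (k x)) by (eapply (sim_maps (snd q)); eauto).
    assert (Hgk : A (g (k x))) by (eapply sim_maps; eauto).
    rewrite <- E by (apply Hsub; auto). rewrite Eg2 by auto. apply Ek; auto.
Qed.

Lemma transport_full B1 B2 h f1 f2 : Sim B1 B2 h -> (forall x, B1 x -> f2 (h x) = f1 x) ->
  cls d Sim (f1, B1) = cls d Sim (f2, B2).
Proof.
  intros Hh E. rewrite (transport B1 B2 h f1 f2 B1 Hh E); [|apply (FS1 _ _ _ Hh)|intros x; auto].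
  f_equal. f_equal. apply pred_ext; intros y; split.
  - intros [x [Hx <-]]. eapply sim_maps; eauto.
  - intros Hy. destruct (sim_surj _ _ _ _ Hh Hy) as [x [Hx <-]]. exists x; auto.
Qed.

Lemma cls_agree B f g : is_ball d B -> (forall x, B x -> f x = g x) -> cls d Sim (f, B) = cls d Sim (g, B).
Proof.
  intros HB E. apply (transport_full B B (fun x => x)); [apply FS4; auto|]. intros; symmetry; auto.
Qed.

Lemma max_transport B1 B2 h A : Sim B1 B2 h -> max_proper_subball d B1 A ->
  max_proper_subball d B2 (image h A).
Proof.
  intros Hh [HA [HAB [HnA Hmax]]].
  destruct (FS5 _ _ _ Hh) as [g [Hg [Eg1 Eg2]]].
  pose proof (FS7 _ _ _ _ Hh HA HAB) as HhA.
  split; [apply (FS1 _ _ _ HhA)|]. split; [|split].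
  - intros y [x [Hx <-]]. eapply sim_maps; eauto.
  - intros Hs. apply HnA. intros x Hx.
    destruct (Hs (h x)) as [a [Ha E]]; [eapply sim_maps; eauto|].
    assert (a = x) by (apply (sim_inj B1 B2 h); auto). subst; auto.
  - intros A' HA' Hsub1 Hsub2 Hnot.
    pose proof (FS7 _ _ _ _ Hg HA' Hsub2) as HgA.
    assert (S1 : subset (image g A') A).
    { apply Hmax.
      - apply (FS1 _ _ _ HgA).
      - intros a Ha. exists (h a). split; [apply Hsub1; exists a; auto|]. apply Eg1; auto.
      - intros x [y [Hy <-]]. eapply sim_maps; eauto.
      - intros Hs. apply Hnot. intros y Hy.
        destruct (Hs (g y)) as [a' [Ha' E]]; [eapply sim_maps; eauto|].
        assert (a' = y) by (eapply (sim_inj B2 B1 g); eauto). subst; auto. }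
    intros y Hy. exists (g y). split; [apply S1; exists y; auto|]. apply Eg2; auto.
Qed.

Notation cl := (cls d Sim).

Lemma vh_info v k : vertex_height d Sim v k -> exists ps : list Pair,
  length ps = k /\ (forall p, In p ps -> inS d Sim p) /\
  (forall c, v c <-> In c (map cl ps)) /\ NoDup (map cl ps) /\
  (forall p q, In p ps -> In q ps -> cl p <> cl q -> forall y, ~ (img p y /\ img q y)).
Proof.
  intros [ps [Hl [HS [Hv [Hdisj Hcov]]]]]. exists ps. split; auto. split; auto. split; [|split].
  - intros c. rewrite Hv, in_map_iff. split; intros [p [H1 H2]]; exists p; auto.
  - apply (NoDup_nth _ (cl pair0)). intros i j Hi Hj E.
    rewrite length_map in Hi, Hj. rewrite !map_nth in E.
    destruct (Nat.eq_dec i j) as [|Hne]; auto. exfalso.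
    assert (Hq : inS d Sim (nth j ps pair0)) by (apply HS, nth_In; lia).
    assert (Hp : inS d Sim (nth i ps pair0)) by (apply HS, nth_In; lia).
    destruct (inS_img_ne _ Hp) as [y Hy].
    pose proof (cls_eq_img _ _ Hq E y) as Hiff.
    apply (Hdisj i j) with y; try lia. split; [exact Hy|]. apply Hiff, Hy.
  - intros p q Hp Hq Hne y [Hy1 Hy2].
    destruct (In_nth _ _ pair0 Hp) as [i [Hi Ei]]. destruct (In_nth _ _ pair0 Hq) as [j [Hj Ej]].
    destruct (Nat.eq_dec i j) as [->|Hij]; [apply Hne; rewrite <- Ei, <- Ej; auto|].
    apply (Hdisj i j) with y; try lia. rewrite Ei, Ej. split; auto.
Qed.

Lemma height_unique v a b : vertex_height d Sim v a -> vertex_height d Sim v b -> a = b.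
Proof.
  intros Ha Hb. destruct (vh_info v a Ha) as [pa [La [_ [Ma [Na _]]]]].
  destruct (vh_info v b Hb) as [pb [Lb [_ [Mb [Nb _]]]]].
  assert (length (map cl pa) <= length (map cl pb))%nat
    by (apply NoDup_incl_length; auto; intros c Hc; apply Mb, Ma, Hc).
  assert (length (map cl pb) <= length (map cl pa))%nat
    by (apply NoDup_incl_length; auto; intros c Hc; apply Ma, Mb, Hc).
  rewrite !length_map in *. lia.
Qed.

Lemma exp_height u w a b : simple_expansion d Sim u w -> vertex_height d Sim u a ->
  vertex_height d Sim w b -> (a < b)%nat.
Proof.
  intros [_ [_ [f [B [Hu [[x [y [Bx [By Hxy]]]] Hw]]]]]] Ha Hb.
  destruct (vh_info u a Ha) as [pu [Lu [Su [Mu [Nu Du]]]]].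
  destruct (vh_info w b Hb) as [pw [Lw [Sw [Mw [Nw Dw]]]]].
  apply Mu in Hu. apply in_map_iff in Hu. destruct Hu as [p0 [E0 Hp0]].
  assert (Hc0 : cl (f, B) p0) by (rewrite <- E0; apply cls_refl; auto).
  destruct Hc0 as [_ [h0 [Hh0 Eh0]]]. simpl in Hh0, Eh0.
  assert (HB : is_ball d B) by apply (FS1 _ _ _ Hh0).
  assert (finj : forall b1 b2, B b1 -> B b2 -> f b1 = f b2 -> b1 = b2).
  { intros b1 b2 H1 H2 E.
    destruct (sim_surj _ _ _ _ Hh0 H1) as [z1 [Hz1 <-]].
    destruct (sim_surj _ _ _ _ Hh0 H2) as [z2 [Hz2 <-]].
    rewrite !Eh0 in E by auto. f_equal.
    destruct (Su p0 Hp0) as [_ [[Hinj _] _]]. apply Hinj; auto. }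
  destruct (geom d UM SC B HB (ex_intro _ x (ex_intro _ y (conj Bx (conj By Hxy)))))
    as [del [N [Hdel [_ [Hmax [x1 [z1 [Bx1 [Bz1 Hdisj]]]]]]]]].
  set (A1 := bs d x1 del). set (A2 := bs d z1 del).
  assert (A1x : A1 x1) by (unfold A1, bs; rewrite (d_0 d UM); lra).
  assert (A2z : A2 z1) by (unfold A2, bs; rewrite (d_0 d UM); lra).
  assert (W1 : w (cl (f, A1))) by (apply Hw; right; exists A1; split; auto; apply Hmax; auto).
  assert (W2 : w (cl (f, A2))) by (apply Hw; right; exists A2; split; auto; apply Hmax; auto).
  assert (SA1 : subset A1 B) by apply (Hmax x1 Bx1).
  assert (SA2 : subset A2 B) by apply (Hmax z1 Bz1).
  set (R0 := remove cdec (cl (f, B)) (map cl pu)).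
  assert (Nrem : forall A z, subset A B -> A z -> forall c, In c R0 -> c <> cl (f, A)).
  { intros A z HAB Az c Hc E. apply in_remove in Hc. destruct Hc as [Hc Hne].
    apply in_map_iff in Hc. destruct Hc as [p [Ep Hp]].
    assert (Hne' : cl p <> cl p0) by (rewrite Ep, E0; auto).
    apply (Du p p0 Hp Hp0 Hne' (f z)). split.
    - apply (cls_eq_img (f, A) p (Su p Hp)); [congruence|]. exists z; auto.
    - apply (cls_eq_img (f, B) p0 (Su p0 Hp0)); [congruence|]. exists z; split; [apply HAB; auto|reflexivity]. }
  assert (N12 : cl (f, A1) <> cl (f, A2)).
  { intros E. apply Mw in W1. apply in_map_iff in W1. destruct W1 as [q [Eq Hq]].
    assert (I1 : img q (f x1)).
    { apply (cls_eq_img (f, A1) q (Sw q Hq)); auto. exists x1; auto. }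
    apply (cls_eq_img (f, A2) q (Sw q Hq)) in I1; [|rewrite Eq; auto].
    destruct I1 as [a1 [Ha2 Ea]]. simpl in Ha2, Ea.
    assert (a1 = x1) by (apply finj; auto). subst a1. apply (Hdisj x1); split; auto. }
  assert (ND : NoDup (cl (f, A1) :: cl (f, A2) :: R0)).
  { constructor; [|constructor].
    - intros [E|Hin]; [auto|]. apply (Nrem A1 x1 SA1 A1x _ Hin); auto.
    - intros Hin. apply (Nrem A2 z1 SA2 A2z _ Hin); auto.
    - apply NoDup_remove_gen; auto. }
  assert (INC : incl (cl (f, A1) :: cl (f, A2) :: R0) (map cl pw)).
  { intros c [<-|[<-|Hc]]; try (apply Mw; auto).
    apply in_remove in Hc. destruct Hc as [Hc Hne]. apply Hw. left. split; auto. apply Mu; auto. }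
  assert (L1 := NoDup_incl_length ND INC).
  assert (L2 : (length (map cl pu) <= length (cl (f, B) :: R0))%nat).
  { apply NoDup_incl_length; auto. intros c Hc.
    destruct (cdec c (cl (f, B))) as [->|Hne]; [now left|right].
    apply in_in_remove; auto. }
  simpl in L1, L2. rewrite !length_map in *. lia.
Qed.

Lemma vle_height u w : vle d Sim u w -> u = w \/
  (is_vertex d Sim u /\ is_vertex d Sim w /\
   forall a b, vertex_height d Sim u a -> vertex_height d Sim w b -> (a < b)%nat).
Proof.
  induction 1 as [x|x y z Hxy Hyz IH]; [now left|right].
  pose proof Hxy as [[a0 Hx] [[c Hy] _]].
  destruct IH as [<-|[_ [Hz Hlt]]].
  - split; [exists a0; auto|split; [exists c; auto|]].
    intros a b Ha Hb. eapply exp_height; eauto.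
  - split; [exists a0; auto|split; auto].
    intros a b Ha Hb. specialize (Hlt c b Hy Hb). pose proof (exp_height _ _ _ _ Hxy Ha Hy). lia.
Qed.

Lemma vle_trans u v w : vle d Sim u v -> vle d Sim v w -> vle d Sim u w.
Proof.
  intros H1 H2. apply clos_rt_rt1n. eapply rt_trans; apply clos_rt1n_rt; eauto.
Qed.

Lemma chain_first s a : strict_chain d Sim (a :: s) -> (forall x, In x (a :: s) -> is_vertex d Sim x) ->
  forall b, In b s -> vle d Sim a b /\
    (forall ha hb, vertex_height d Sim a ha -> vertex_height d Sim b hb -> (ha < hb)%nat).
Proof.
  revert a. induction s as [|b0 s IH]; intros a Hc Hv b Hb; [destruct Hb|].
  destruct Hc as [[Hle Hne] Hc].
  destruct (vle_height _ _ Hle) as [E|[_ [_ Hlt]]]; [contradiction|].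
  destruct Hb as [<-|Hb]; [split; auto|].
  destruct (IH b0 Hc (fun x Hx => Hv x (or_intror Hx)) b Hb) as [Hle2 Hlt2].
  split; [eapply vle_trans; eauto|].
  intros ha hb Ha Hbb. destruct (Hv b0 (or_intror (or_introl eq_refl))) as [c Hc0].
  specialize (Hlt ha c Ha Hc0). specialize (Hlt2 c hb Hc0 Hbb). lia.
Qed.

Lemma chain_nodup s : strict_chain d Sim s -> (forall x, In x s -> is_vertex d Sim x) -> NoDup s.
Proof.
  induction s as [|a s IH]; intros Hc Hv; constructor.
  - intros Hin. destruct (chain_first s a Hc Hv a Hin) as [_ Hlt].
    destruct (Hv a (or_introl eq_refl)) as [h Hh]. specialize (Hlt h h Hh Hh). lia.
  - apply IH; [destruct s; simpl in *; tauto|]. intros x Hx; apply Hv; now right.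
Qed.

Lemma chain_comp s : strict_chain d Sim s -> (forall x, In x s -> is_vertex d Sim x) ->
  forall x y, In x s -> In y s -> vle d Sim x y \/ vle d Sim y x.
Proof.
  induction s as [|a s IH]; intros Hc Hv x y Hx Hy; [destruct Hx|].
  assert (Hc' : strict_chain d Sim s) by (destruct s; simpl in *; tauto).
  assert (Hv' : forall x, In x s -> is_vertex d Sim x) by (intros; apply Hv; now right).
  destruct Hx as [Ex|Hx]; destruct Hy as [Ey|Hy].
  - subst; left; apply rt1n_refl.
  - subst; left; apply (chain_first s x Hc Hv y Hy).
  - subst; right; apply (chain_first s y Hc Hv x Hx).
  - apply IH; auto.
Qed.


Lemma vtx_finite (K : list Cls) : exists LV : list Vtx, forall w b, vertex_height d Sim w b ->
  (forall c, w c -> In c K) -> In w LV.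
Proof.
  destruct (allND K) as [LL HLL]. exists (map (fun s (c : Cls) => In c s) LL).
  intros w b Hw HK. destruct (vh_info w b Hw) as [pw [_ [_ [Mw [Nw _]]]]].
  apply in_map_iff. exists (map cl pw). split.
  - apply pred_ext; intros c; rewrite Mw; tauto.
  - apply HLL; auto. intros c Hc; apply HK, Mw, Hc.
Qed.

Lemma opt_list (A : X -> Prop) (V : list Pair) : exists O : list (X -> X),
  forall p, In p V -> forall g, Sim A (snd p) g -> exists o, In o O /\ forall x, A x -> fst p (g x) = o x.
Proof.
  induction V as [|p V [O IH]]; [exists []; intros p []|].
  destruct (FS3 A (snd p)) as [L HL].
  exists (map (fun l x => fst p (l x)) L ++ O).
  intros q [->|Hq] g Hg.
  - destruct (HL g Hg) as [l [Hl Ag]]. exists (fun x => fst q (l x)). split.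
    + apply in_or_app; left. apply in_map_iff; exists l; auto.
    + intros x Hx. rewrite Ag; auto.
  - destruct (IH q Hq g Hg) as [o [Ho Eo]]. exists o; split; auto. apply in_or_app; auto.
Qed.

Lemma PW (As : list (X -> Prop)) (V : list Pair) : exists Fs : list (X -> X), forall f',
  (forall A, In A As -> exists p, In p V /\ exists g, Sim A (snd p) g /\ forall x, A x -> f' x = fst p (g x)) ->
  exists F, In F Fs /\ forall x, (exists A, In A As /\ A x) -> f' x = F x.
Proof.
  induction As as [|A As [Fs IH]].
  - exists [fun x => x]. intros f' _. exists (fun x => x). split; [now left|].
    intros x [A [[] _]].
  - destruct (opt_list A V) as [O HO].
    exists (flat_map (fun o => map (fun F x => if excluded_middle_informative (A x) then o x else F x) Fs) O).
    intros f' Hf.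
    destruct (Hf A (or_introl eq_refl)) as [p [Hp [g [Hg Eg]]]].
    destruct (HO p Hp g Hg) as [o [Ho Eo]].
    destruct (IH f' (fun A' HA' => Hf A' (or_intror HA'))) as [F [HF EF]].
    exists (fun x => if excluded_middle_informative (A x) then o x else F x). split.
    + apply in_flat_map. exists o. split; auto. apply in_map_iff. exists F; auto.
    + intros x [A0 [HA0 Hx]]. destruct (excluded_middle_informative (A x)) as [Ax|nAx].
      * rewrite Eg, Eo; auto.
      * apply EF. destruct HA0 as [->|HA0]; [contradiction|]. exists A0; auto.
Qed.

Lemma candB (w : Vtx) (pw : list Pair) (B0 : X -> Prop) :
  (forall p, In p pw -> inS d Sim p) -> (forall c, w c <-> In c (map cl pw)) ->
  exists CB : list Cls, forall f', is_ball d B0 -> (exists x y, B0 x /\ B0 y /\ x <> y) ->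
  (forall A', max_proper_subball d B0 A' -> w (cl (f', A'))) -> In (cl (f', B0)) CB.
Proof.
  intros Sw Mw.
  destruct (classic (is_ball d B0 /\ exists x y, B0 x /\ B0 y /\ x <> y)) as [[HB H2]|Hn];
    [|exists []; intros f' HB H2; exfalso; apply Hn; auto].
  destruct (maxsub_cover d UM SC B0 HB H2) as [LA [HLA Hcov]].
  destruct (PW LA pw) as [Fs HFs].
  exists (map (fun F => cl (F, B0)) Fs). intros f' _ _ Hw.
  destruct (HFs f') as [F [HF EF]].
  - intros A HA. specialize (Hw A (HLA A HA)). apply Mw, in_map_iff in Hw.
    destruct Hw as [p [Ep Hp]]. exists p. split; auto.
    assert (Hc : cl (f', A) p) by (rewrite <- Ep; apply cls_refl; auto).
    destruct Hc as [_ [h [Hh Eh]]]. simpl in Hh, Eh.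
    destruct (FS5 _ _ _ Hh) as [g [Hg [Eg1 Eg2]]].
    exists g. split; auto. intros x Hx. rewrite <- (Eg2 x Hx) at 1. apply Eh.
    eapply sim_maps; eauto.
  - apply in_map_iff. exists F. split; auto. symmetry. apply cls_agree; auto.
Qed.

Lemma cand_all (w : Vtx) (pw : list Pair) (Bs : list (X -> Prop)) :
  (forall p, In p pw -> inS d Sim p) -> (forall c, w c <-> In c (map cl pw)) ->
  exists CC : list Cls, forall B0 f', In B0 Bs -> is_ball d B0 -> (exists x y, B0 x /\ B0 y /\ x <> y) ->
  (forall A', max_proper_subball d B0 A' -> w (cl (f', A'))) -> In (cl (f', B0)) CC.
Proof.
  intros Sw Mw. induction Bs as [|B0 Bs [CC IH]]; [exists []; intros ? ? []|].
  destruct (candB w pw B0 Sw Mw) as [CB HCB].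
  exists (CB ++ CC). intros B f' [->|HB] H1 H2 H3; apply in_or_app.
  - left; auto.
  - right; auto.
Qed.

Lemma succ_finite v : is_vertex d Sim v -> exists L, forall w, simple_expansion d Sim v w -> In w L.
Proof.
  intros [a Ha]. destruct (vh_info v a Ha) as [pv [_ [Sv [Mv _]]]].
  assert (HC : exists C : list Cls, forall p, In p pv -> forall A, max_proper_subball d (snd p) A ->
     In (cl (fst p, A)) C).
  { clear Mv. induction pv as [|p pv IH]; [exists []; intros ? []|].
    destruct IH as [C HC]; [intros; apply Sv; now right|].
    destruct (maxsub_list d UM SC (snd p) (proj1 (Sv p (or_introl eq_refl)))) as [LA HLA].
    exists (map (fun A => cl (fst p, A)) LA ++ C). intros q [->|Hq] A HA; apply in_or_app.
    + left. apply in_map_iff; exists A; auto.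
    + right; auto. }
  destruct HC as [C HC].
  destruct (vtx_finite (map cl pv ++ C)) as [LV HLV].
  exists LV. intros w Hexp. pose proof Hexp as [_ [[b Hb] [f [B [Hv [_ Hw]]]]]].
  apply (HLV w b Hb). intros c Hc. apply Hw in Hc. apply in_or_app.
  destruct Hc as [[Hc _]|[A [HA ->]]]; [left; apply Mv; auto|right].
  apply Mv, in_map_iff in Hv. destruct Hv as [p [Ep Hp]].
  assert (Hc : cl (f, B) p) by (rewrite <- Ep; apply cls_refl; auto).
  destruct Hc as [_ [h [Hh Eh]]]. simpl in Hh, Eh.
  destruct (FS5 _ _ _ Hh) as [g [Hg [Eg1 Eg2]]].
  destruct HA as [HAb [HAB HArest]].
  rewrite (transport B (snd p) g f (fst p) A Hg); auto.
  - apply HC; auto. apply max_transport with B; auto. split; auto.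
  - intros x Hx. rewrite <- Eh; [f_equal; auto|]. eapply sim_maps; eauto.
Qed.

Hypothesis FB : finitely_many_ball_classes d Sim.

Lemma pred_finite w : is_vertex d Sim w -> exists L, forall u, simple_expansion d Sim u w -> In u L.
Proof.
  intros [b Hb]. destruct (vh_info w b Hb) as [pw [_ [Sw [Mw _]]]].
  destruct FB as [Bs HBs].
  destruct (cand_all w pw Bs Sw Mw) as [CC HCC].
  destruct (vtx_finite (map cl pw ++ CC)) as [LV HLV].
  exists LV. intros u Hexp. pose proof Hexp as [[a Ha] [_ [f [B [Hu [[x [y [Bx [By Hxy]]]] Hw]]]]]].
  apply (HLV u a Ha). intros c Hc. apply in_or_app.
  destruct (cdec c (cl (f, B))) as [->|Hne]; [right|left; apply Mw, Hw; left; auto].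
  destruct (vh_info u a Ha) as [pu [_ [Su [Mu _]]]].
  apply Mu, in_map_iff in Hu. destruct Hu as [p0 [E0 Hp0]].
  assert (Hc0 : cl (f, B) p0) by (rewrite <- E0; apply cls_refl; auto).
  destruct Hc0 as [_ [h0 [Hh0 _]]]. simpl in Hh0.
  assert (HB : is_ball d B) by apply (FS1 _ _ _ Hh0).
  destruct (HBs B HB) as [B0 [HB0 [k Hk]]].
  destruct (FS5 _ _ _ Hk) as [ki [Hki [Ek1 Ek2]]].
  set (f' := fun z => f (ki z)).
  rewrite (transport_full B B0 k f f' Hk); [|intros z Hz; unfold f'; rewrite Ek1; auto].
  apply (HCC B0 f' HB0).
  - apply (FS1 _ _ _ Hk).
  - exists (k x), (k y). split; [eapply sim_maps; eauto|]. split; [eapply sim_maps; eauto|].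
    intros E. apply Hxy. apply (sim_inj B B0 k); auto.
  - intros A' HA'. pose proof (max_transport B0 B ki A' Hki HA') as HA.
    assert (Wc : w (cl (f, image ki A'))) by (apply Hw; right; exists (image ki A'); auto).
    destruct HA as [HAb [HAB _]].
    rewrite (transport B B0 k f f' (image ki A') Hk) in Wc; auto;
      [|intros z Hz; unfold f'; rewrite Ek1; auto].
    replace A' with (image k (image ki A')); auto.
    destruct HA' as [_ [HA'B _]].
    apply pred_ext; intros z; split.
    + intros [z1 [[z2 [Hz2 <-]] <-]]. rewrite Ek2; auto.
    + intros Hz. exists (ki z). split; [exists z; auto|]. apply Ek2; auto.
Qed.

Lemma lower_finite h : forall w, vertex_height d Sim w h -> exists L, forall u, vle d Sim u w -> In u L.
Proof.
  induction h as [h IHh] using (well_founded_induction Nat.lt_wf_0). intros w Hw.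
  destruct (pred_finite w (ex_intro _ h Hw)) as [P HP].
  assert (HL : forall l : list Vtx, exists L, forall z, In z l -> simple_expansion d Sim z w ->
     forall u, vle d Sim u z -> In u L).
  { induction l as [|z l [L IH]]; [exists []; intros ? []|].
    destruct (classic (simple_expansion d Sim z w)) as [He|Hn].
    - pose proof He as [[c Hc] _].
      destruct (IHh c (exp_height z w c h He Hc Hw) z Hc) as [Lz HLz].
      exists (Lz ++ L). intros z' [->|Hz'] He' u Hu; apply in_or_app.
      + left; auto.
      + right; eauto.
    - exists L. intros z' [->|Hz'] He' u Hu; [contradiction|]. eauto. }
  destruct (HL P) as [L HLP]. exists (w :: L). intros u Hu.
  apply clos_rt1n_rt, clos_rt_rtn1 in Hu. destruct Hu as [|z w' Hzw Huz]; [now left|right].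
  apply (HLP z); auto. apply clos_rt_rt1n, clos_rtn1_rt; auto.
Qed.

Lemma upper_finite j : forall v a, vertex_height d Sim v a -> exists L, forall w b, vle d Sim v w ->
  vertex_height d Sim w b -> (b <= a + j)%nat -> In w L.
Proof.
  induction j as [|j IH]; intros v a Ha.
  - exists [v]. intros w b Hvw Hb Hle. destruct (vle_height _ _ Hvw) as [->|[_ [_ Hlt]]]; [now left|].
    specialize (Hlt a b Ha Hb). lia.
  - destruct (succ_finite v (ex_intro _ a Ha)) as [Sc HS].
    assert (HL : forall l : list Vtx, exists L, forall z, In z l -> simple_expansion d Sim v z ->
       forall w b, vle d Sim z w -> vertex_height d Sim w b -> (b <= a + S j)%nat -> In w L).
    { induction l as [|z l [L IHl]]; [exists []; intros ? []|].
      destruct (classic (simple_expansion d Sim v z)) as [He|Hn].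
      - pose proof He as [_ [[c Hc] _]].
        pose proof (exp_height v z a c He Ha Hc).
        destruct (IH z c Hc) as [Lz HLz].
        exists (Lz ++ L). intros z' [->|Hz'] He' w b Hw Hb Hle; apply in_or_app.
        + left. apply (HLz w b); auto. lia.
        + right. eauto.
      - exists L. intros z' [->|Hz'] He' w b Hw Hb Hle; [contradiction|]. eauto. }
    destruct (HL Sc) as [L HLS]. exists (v :: L). intros w b Hvw Hb Hle.
    destruct Hvw as [|z w' Hvz Hzw]; [now left|right].
    apply (HLS z (HS z Hvz) Hvz w' b); auto.
Qed.

End Cl.

Theorem proposition4p6 (X : Type) (d : X -> X -> R)
  (Sim : (X -> Prop) -> (X -> Prop) -> (X -> X) -> Prop) :
  ultrametric d -> seq_compact d -> inhabited X ->
  finite_similarity_structure d Sim ->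
  finitely_many_ball_classes d Sim ->
  forall n : nat, K_le_locally_finite d Sim n.
Proof.
  intros UM SC _ FS FB n v [k [Hk Hkn]].
  destruct (lower_finite d Sim UM SC FS FB k v Hk) as [Lo HLo].
  destruct (upper_finite d Sim UM SC FS n v k Hk) as [Up HUp].
  destruct (allND (Lo ++ Up)) as [LL HLL].
  exists LL. intros s [_ [Hh Hc]] Hv.
  assert (Hvx : forall x, In x s -> is_vertex d Sim x).
  { intros x Hx. destruct (Hh x Hx) as [h [Hx' _]]. exists h; auto. }
  apply HLL.
  - apply (chain_nodup d Sim UM SC FS); auto.
  - intros x Hx. apply in_or_app. destruct (chain_comp d Sim UM SC FS s Hc Hvx x v Hx Hv) as [Hxv|Hvx'].
    + left; auto.
    + right. destruct (Hh x Hx) as [b [Hb Hbn]]. apply (HUp x b); auto. lia.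
Qed.
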